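(* Let $f\in\mathrm{AC}^1$. If $n_j$ is an odd sequence then \[ \lim_{j\to\infty} n_j\,\big\|B_{n_j}(f)-f-O(f)/D_{n_j}\big\|_\infty=0, \] and if $n_j$ is an even sequence then \[ \lim_{j\to\infty} n_j\,\big\|B_{n_j}(f)-f-E(f)/D_{n_j}\big\|_\infty=0. \]
   Context: Nodes: $x_{k,n}:=2k/n-1$, $k=0,\dots,n$. $B_n(f,x):=N_n(f,x)/D_n(x)$ for $x$ not a node, $B_n(f,x_{k,n}):=f(x_{k,n})$, where $N_n(f,x)=\sum_{k=0}^n(-1)^k\frac{f(x_{k,n})}{x-x_{k,n}}$ and $D_n(x)=\sum_{k=0}^n(-1)^k\frac{1}{x-x_{k,n}}$. $\mathrm{AC}^1$: functions $f:[-1,1]\to\mathbb{R}$ differentiable at every point of $[-1,1]$ (one-sided at $\pm1$) with $f'$ absolutely continuous. A sequence $n_j$ is a strictly increasing map $\mathbb{N}\to\mathbb{N}$; odd/even if all $n_j$ are odd/even. For $x\in(-1,1)$, $O(f,x):=\frac{f(x)-f(1)}{2(x-1)}-\frac{f(x)-f(-1)}{2(x+1)}$ and $E(f,x):=\frac{f(1)-f(x)}{2(x-1)}+\frac{f(-1)-f(x)}{2(x+1)}$. The sup norm is taken over the points $x\in(-1,1)$ that are not nodes $x_{k,n_j}$ (at the nodes the expressions extend continuously by $0$). *)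

(* Defs.v *)
From Stdlib Require Import Reals Lra Lia.
Open Scope R_scope.

Fixpoint rsum (F : nat -> R) (m : nat) : R :=
  match m with
  | O => 0
  | S p => rsum F p + F p
  end.

Definition node (n k : nat) : R := 2 * INR k / INR n - 1.

Definition Nn (n : nat) (f : R -> R) (x : R) : R :=
  rsum (fun k => (-1) ^ k * f (node n k) / (x - node n k)) (S n).

Definition Dn (n : nat) (x : R) : R :=
  rsum (fun k => (-1) ^ k / (x - node n k)) (S n).

Fixpoint node_index (n : nat) (x : R) (m : nat) : option nat :=
  match m with
  | O => None
  | S p =>
      match node_index n x p with
      | Some k => Some k
      | None => if Req_EM_T x (node n p) then Some p else None
      end
  end.

Definition is_node (n : nat) (x : R) : Prop :=
  exists k, (k <= n)%nat /\ x = node n k.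

Definition Bn (n : nat) (f : R -> R) (x : R) : R :=
  match node_index n x (S n) with
  | Some k => f (node n k)
  | None => Nn n f x / Dn n x
  end.

Definition Ofun (f : R -> R) (x : R) : R :=
  (f x - f 1) / (2 * (x - 1)) - (f x - f (-1)) / (2 * (x + 1)).
Definition Efun (f : R -> R) (x : R) : R :=
  (f 1 - f x) / (2 * (x - 1)) + (f (-1) - f x) / (2 * (x + 1)).

(* l is the derivative of f at x relative to [a,b] (one-sided at endpoints) *)
Definition deriv_within (f : R -> R) (a b x l : R) : Prop :=
  forall eps, 0 < eps -> exists delta, 0 < delta /\
    forall y, a <= y <= b -> y <> x -> Rabs (y - x) < delta ->
      Rabs ((f y - f x) / (y - x) - l) < eps.

Definition abs_cont_on (g : R -> R) (a b : R) : Prop :=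
  forall eps, 0 < eps -> exists delta, 0 < delta /\
    forall (m : nat) (u v : nat -> R),
      (forall k, (k < m)%nat -> a <= u k /\ u k <= v k /\ v k <= b) ->
      (forall i j, (i < m)%nat -> (j < m)%nat -> i <> j ->
         v i <= u j \/ v j <= u i) ->
      rsum (fun k => v k - u k) m < delta ->
      rsum (fun k => Rabs (g (v k) - g (u k))) m < eps.

Definition AC1 (f : R -> R) : Prop :=
  exists f' : R -> R,
    (forall x, -1 <= x <= 1 -> deriv_within f (-1) 1 x (f' x)) /\
    abs_cont_on f' (-1) 1.

Definition strict_incr (s : nat -> nat) : Prop :=
  forall i j, (i < j)%nat -> (s i < s j)%nat.

Definition scaled_sup_to_zero (s : nat -> nat) (f G : R -> R) : Prop :=
  forall eps, 0 < eps -> exists J, forall j, (J <= j)%nat ->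
    forall x, -1 < x < 1 -> ~ is_node (s j) x ->
      INR (s j) * Rabs (Bn (s j) f x - f x - G x / Dn (s j) x) <= eps.

(* Main.v *)
Require Import Defs.
From Stdlib Require Import Reals.
Open Scope R_scope.
From Stdlib Require Import Lra Lia Psatz Classical.
From Coquelicot Require Import Coquelicot.
Open Scope R_scope.

Lemma rsum_ext F G m : (forall k, (k < m)%nat -> F k = G k) -> rsum F m = rsum G m.
Proof.
  induction m; intros H; simpl; auto.
  rewrite IHm by (intros; apply H; lia). rewrite H by lia. reflexivity.
Qed.

Lemma rsum_plus F G m : rsum (fun k => F k + G k) m = rsum F m + rsum G m.
Proof. induction m; simpl; [lra|rewrite IHm; lra]. Qed.

Lemma rsum_minus F G m : rsum (fun k => F k - G k) m = rsum F m - rsum G m.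
Proof. induction m; simpl; [lra|rewrite IHm; lra]. Qed.

Lemma rsum_scal c F m : rsum (fun k => c * F k) m = c * rsum F m.
Proof. induction m; simpl; [lra|rewrite IHm; lra]. Qed.

Lemma rsum_const c m : rsum (fun _ => c) m = INR m * c.
Proof. induction m; simpl rsum; [simpl; lra|rewrite IHm, S_INR; lra]. Qed.

Lemma rsum_zero m : rsum (fun _ => 0) m = 0.
Proof. rewrite rsum_const; lra. Qed.

Lemma rsum_le F G m : (forall k, (k < m)%nat -> F k <= G k) -> rsum F m <= rsum G m.
Proof.
  induction m; intros H; simpl; [lra|].
  assert (rsum F m <= rsum G m) by (apply IHm; intros; apply H; lia).
  assert (F m <= G m) by (apply H; lia). lra.
Qed.

Lemma rsum_nonneg F m : (forall k, (k < m)%nat -> 0 <= F k) -> 0 <= rsum F m.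
Proof. intros H. rewrite <- (rsum_zero m). apply rsum_le. auto. Qed.

Lemma rsum_abs F m : Rabs (rsum F m) <= rsum (fun k => Rabs (F k)) m.
Proof.
  induction m; simpl; [rewrite Rabs_R0; lra|].
  eapply Rle_trans; [apply Rabs_triang|]. lra.
Qed.

Lemma rsum_shift F m : rsum F (S m) = F O + rsum (fun k => F (S k)) m.
Proof.
  induction m; simpl; [lra|]. simpl in IHm. rewrite IHm. lra.
Qed.

Lemma rsum_add F m p : rsum F (m + p) = rsum F m + rsum (fun k => F (m + k)%nat) p.
Proof.
  induction p; simpl. rewrite Nat.add_0_r; lra.
  rewrite Nat.add_succ_r. simpl. rewrite IHp. lra.
Qed.

Lemma rsum_double F p q :
  rsum F (p * q) = rsum (fun i => rsum (fun r => F (i * q + r)%nat) q) p.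
Proof.
  induction p; simpl; [reflexivity|].
  replace (q + p * q)%nat with (p * q + q)%nat by lia.
  rewrite rsum_add, IHp. reflexivity.
Qed.

Lemma rsum_telescope G m : rsum (fun k => G (S k) - G k) m = G m - G O.
Proof. induction m; simpl; [lra|rewrite IHm; lra]. Qed.

Lemma rsum_rev F m : rsum F m = rsum (fun i => F (m - 1 - i)%nat) m.
Proof.
  induction m; [reflexivity|].
  rewrite (rsum_shift (fun i => F (S m - 1 - i)%nat)).
  change (rsum F (S m)) with (rsum F m + F m). rewrite IHm.
  replace (S m - 1 - 0)%nat with m by lia.
  rewrite Rplus_comm. f_equal. apply rsum_ext. intros k Hk. f_equal. lia.
Qed.

Lemma rsum_delta X N i : (i < N)%nat ->
  rsum (fun i' => if Nat.eqb i' i then X i' else 0) N = X i.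
Proof.
  induction N; intros Hi; [lia|]. simpl.
  destruct (Nat.eq_dec i N) as [->|Hne].
  - rewrite Nat.eqb_refl.
    rewrite (rsum_ext _ (fun _ => 0)). rewrite rsum_zero; lra.
    intros k Hk. destruct (Nat.eqb_spec k N); [lia|reflexivity].
  - rewrite IHN by lia. destruct (Nat.eqb_spec N i); [lia|lra].
Qed.

Lemma pow_m1_abs k : Rabs ((-1) ^ k) = 1.
Proof. rewrite <- RPow_abs. replace (Rabs (-1)) with 1 by (unfold Rabs; destruct Rcase_abs; lra). apply pow1. Qed.

Lemma pow_m1_sq k : (-1) ^ k * (-1) ^ k = 1.
Proof. rewrite <- pow_add. replace (k + k)%nat with (2 * k)%nat by lia.
  rewrite pow_mult. replace ((-1)^2) with 1 by (simpl; lra). apply pow1. Qed.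

Definition Palt (b : nat -> R) m := rsum (fun i => (-1) ^ i * b i) m.

Lemma Palt_bounds : forall m b, (forall i, 0 <= b i) -> (forall i, b (S i) <= b i) ->
  0 <= Palt b m <= b O /\ ((1 <= m)%nat -> b O - b 1%nat <= Palt b m).
Proof.
  induction m; intros b H0 Hd.
  - unfold Palt; simpl. split; [split; [lra|apply H0]|lia].
  - unfold Palt. rewrite rsum_shift.
    rewrite (rsum_ext _ (fun k => - ((-1)^k * b (S k)))) by (intros; simpl; ring).
    rewrite (rsum_ext _ (fun k => -1 * ((-1)^k * b (S k)))) by (intros; ring).
    rewrite rsum_scal.
    destruct (IHm (fun k => b (S k))) as [[Ha Hb] _]; auto.
    unfold Palt in Ha, Hb. simpl pow.
    pose proof (Hd O). pose proof (H0 1%nat).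
    split; [split|]; intros; lra.
Qed.

Lemma mono_le (e : nat -> R) : (forall l, e l <= e (S l)) -> forall i j, (i <= j)%nat -> e i <= e j.
Proof.
  intros H i j Hij. induction Hij; [lra|]. specialize (H m). lra.
Qed.

Lemma alt_mono_bound (e : nat -> R) :
  (forall l, 0 <= e l) -> (forall l, e l <= e (S l)) ->
  forall m, 0 <= (-1) ^ (S m) * rsum (fun l => (-1) ^ l * e l) m <= e (pred m).
Proof.
  intros H0 Hm m. induction m.
  - simpl. split; [lra|]. specialize (H0 O). lra.
  - simpl rsum. 
    assert (Hp : e (pred m) <= e m) by (apply mono_le; auto; lia).
    replace ((-1) ^ S (S m) * (rsum (fun l => (-1) ^ l * e l) m + (-1) ^ m * e m))
      with (- ((-1) ^ S m * rsum (fun l => (-1) ^ l * e l) m) + ((-1)^m * (-1)^m) * e m)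
      by (simpl; ring).
    rewrite pow_m1_sq. simpl pred. lra.
Qed.

Lemma alt_mono_abs (e : nat -> R) sg :
  (forall l, 0 <= e l) -> (forall l, e l <= e (S l)) -> (forall l, e l <= sg) ->
  forall m, Rabs (rsum (fun l => (-1) ^ l * e l) m) <= sg.
Proof.
  intros H0 Hm Hs m. pose proof (alt_mono_bound e H0 Hm m) as HB.
  rewrite <- (Rmult_1_l (Rabs _)). rewrite <- (pow_m1_abs (S m)), <- Rabs_mult.
  rewrite Rabs_pos_eq by lra. specialize (Hs (pred m)). lra.
Qed.

Definition ramp c d t := Rmin (Rmax t c) d - c.
Definition hinge c t := Rmax (t - c) 0.

Lemma ramp_hinge c d t : c <= d -> ramp c d t = hinge c t - hinge d t.
Proof. intros. unfold ramp, hinge, Rmin, Rmax. repeat destruct Rle_dec; lra. Qed.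

Lemma ramp_bounds c d t : c <= d -> 0 <= ramp c d t <= d - c.
Proof. intros. unfold ramp, Rmin, Rmax. repeat destruct Rle_dec; lra. Qed.

Lemma ramp_mono c d t t' : c <= d -> t <= t' -> ramp c d t <= ramp c d t'.
Proof. intros. unfold ramp, Rmin, Rmax. repeat destruct Rle_dec; lra. Qed.

Lemma ramp_split c e d t : c <= e -> e <= d -> ramp c d t = ramp c e t + ramp e d t.
Proof. intros. unfold ramp, Rmin, Rmax. repeat destruct Rle_dec; lra. Qed.

Lemma ramp_decomp c l t : 0 <= l -> forall p,
  ramp c (c + INR p * l) t = rsum (fun r => ramp (c + INR r * l) (c + INR (S r) * l) t) p.
Proof.
  intros Hl p. induction p.
  - simpl. unfold ramp, Rmin, Rmax. repeat destruct Rle_dec; lra.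
  - cbn [rsum]. rewrite <- IHp. apply ramp_split.
    + assert (0 <= INR p) by apply pos_INR. nra.
    + rewrite S_INR. lra.
Qed.

Section Asum.
Variables (z0 sg : R) (m : nat).

Definition Asum (phi : R -> R) :=
  rsum (fun l => (-1) ^ l * (phi (z0 + INR (S l) * sg) - phi (z0 + INR l * sg))) m.

Lemma Asum_ext phi psi : (forall t, phi t = psi t) -> Asum phi = Asum psi.
Proof. intros H. unfold Asum. apply rsum_ext. intros. rewrite !H. reflexivity. Qed.

Lemma Asum_plus phi psi : Asum (fun t => phi t + psi t) = Asum phi + Asum psi.
Proof. unfold Asum. rewrite <- rsum_plus. apply rsum_ext. intros. ring. Qed.

Lemma Asum_minus phi psi : Asum (fun t => phi t - psi t) = Asum phi - Asum psi.
Proof. unfold Asum. rewrite <- rsum_minus. apply rsum_ext. intros. ring. Qed.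

Lemma Asum_scal c phi : Asum (fun t => c * phi t) = c * Asum phi.
Proof. unfold Asum. rewrite <- rsum_scal. apply rsum_ext. intros. ring. Qed.

Lemma Asum_const c : Asum (fun _ => c) = 0.
Proof. unfold Asum. rewrite (rsum_ext _ (fun _ => 0)). apply rsum_zero. intros. ring. Qed.

Lemma Asum_rsum (w : nat -> R) (rho : nat -> R -> R) N :
  Asum (fun t => rsum (fun i => w i * rho i t) N) = rsum (fun i => w i * Asum (rho i)) N.
Proof.
  induction N; simpl.
  - apply Asum_const.
  - rewrite Asum_plus, IHN, Asum_scal. reflexivity.
Qed.

Lemma Asum_abs phi :
  Rabs (Asum phi) <= rsum (fun l => Rabs (phi (z0 + INR (S l) * sg) - phi (z0 + INR l * sg))) m.
Proof.
  unfold Asum. eapply Rle_trans; [apply rsum_abs|]. apply rsum_le. intros.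
  rewrite Rabs_mult, pow_m1_abs. lra.
Qed.

Lemma Asum_pw phi kappa : (forall l, (l <= m)%nat -> Rabs (phi (z0 + INR l * sg)) <= kappa) ->
  Rabs (Asum phi) <= 2 * INR m * kappa.
Proof.
  intros H. eapply Rle_trans; [apply Asum_abs|].
  replace (2 * INR m * kappa) with (rsum (fun _ => 2 * kappa) m) by (rewrite rsum_const; ring).
  apply rsum_le. intros l Hl.
  eapply Rle_trans; [apply Rabs_triang|]. rewrite Rabs_Ropp.
  pose proof (H (S l) Hl). pose proof (H l ltac:(lia)). lra.
Qed.

Lemma Asum_sum_bound (w : nat -> R) (rho : nat -> R -> R) N :
  Rabs (Asum (fun t => rsum (fun i => w i * rho i t) N)) <=
  rsum (fun i => Rabs (w i) * Rabs (Asum (rho i))) N.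
Proof.
  rewrite Asum_rsum. eapply Rle_trans; [apply rsum_abs|].
  apply rsum_le. intros. rewrite Rabs_mult. lra.
Qed.

Hypothesis sg_nonneg : 0 <= sg.

Lemma Asum_hinge c : Rabs (Asum (hinge c)) <= sg.
Proof.
  unfold Asum.
  set (g := fun t => hinge c (t + sg) - hinge c t).
  assert (Hg : forall l, hinge c (z0 + INR (S l) * sg) - hinge c (z0 + INR l * sg)
                = g (z0 + INR l * sg)).
  { intros. unfold g. rewrite S_INR. f_equal. f_equal. ring. }
  rewrite (rsum_ext _ (fun l => (-1)^l * g (z0 + INR l * sg))) by (intros; rewrite Hg; auto).
  apply (alt_mono_abs (fun l => g (z0 + INR l * sg))).
  - intros. unfold g, hinge, Rmax. repeat destruct Rle_dec; lra.
  - intros l. assert (z0 + INR l * sg <= z0 + INR (S l) * sg) by (rewrite S_INR; nra).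
    unfold g, hinge, Rmax in *. repeat destruct Rle_dec; lra.
  - intros. unfold g, hinge, Rmax. repeat destruct Rle_dec; lra.
Qed.

Lemma Asum_ramp2 c d : c <= d -> Rabs (Asum (ramp c d)) <= 2 * sg.
Proof.
  intros Hcd. rewrite (Asum_ext _ (fun t => hinge c t - hinge d t)) by (intros; apply ramp_hinge; auto).
  rewrite Asum_minus. pose proof (Asum_hinge c). pose proof (Asum_hinge d).
  eapply Rle_trans; [apply Rabs_triang|]. rewrite Rabs_Ropp. lra.
Qed.

Lemma Asum_ramp1 c d : c <= d -> Rabs (Asum (ramp c d)) <= d - c.
Proof.
  intros Hcd. eapply Rle_trans; [apply Asum_abs|].
  rewrite (rsum_ext _ (fun l => ramp c d (z0 + INR (S l) * sg) - ramp c d (z0 + INR l * sg))).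
  - rewrite (rsum_telescope (fun l => ramp c d (z0 + INR l * sg))).
    pose proof (ramp_bounds c d (z0 + INR m * sg) Hcd).
    pose proof (ramp_bounds c d (z0 + INR 0 * sg) Hcd). lra.
  - intros l _. apply Rabs_pos_eq.
    assert (z0 + INR l * sg <= z0 + INR (S l) * sg) by (rewrite S_INR; nra).
    pose proof (ramp_mono c d _ _ Hcd H). lra.
Qed.

End Asum.

Definition acp (F : R -> R) a b eps delta :=
    forall (m : nat) (u v : nat -> R),
      (forall k, (k < m)%nat -> a <= u k /\ u k <= v k /\ v k <= b) ->
      (forall i j, (i < m)%nat -> (j < m)%nat -> i <> j ->
         v i <= u j \/ v j <= u i) ->
      rsum (fun k => v k - u k) m < delta ->
      rsum (fun k => Rabs (F (v k) - F (u k))) m < eps.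

Lemma rsum_if (b : bool) X q : rsum (fun r => if b then X r else 0) q = if b then rsum X q else 0.
Proof. destruct b; [reflexivity|apply rsum_zero]. Qed.

Lemma pow2_gt j : (j < 2 ^ j)%nat.
Proof. induction j; simpl; lia. Qed.

Section Grid.
Variables (F : R -> R) (a b : R).
Hypothesis Hab : a < b.

Definition ell N := (b - a) / INR N.
Definition cpt N i := a + INR i * ell N.
Definition slope N i := (F (cpt N (S i)) - F (cpt N i)) / ell N.
Definition dF N i := F (cpt N (S i)) - F (cpt N i).
Definition PN N t := F a + rsum (fun i => slope N i * ramp (cpt N i) (cpt N (S i)) t) N.

Lemma INR_pos N : (0 < N)%nat -> 0 < INR N.
Proof. intros. apply lt_0_INR. lia. Qed.

Lemma ell_pos N : (0 < N)%nat -> 0 < ell N.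
Proof. intros. unfold ell. apply Rdiv_lt_0_compat; [lra|apply INR_pos; auto]. Qed.

Lemma cpt_S N i : cpt N (S i) = cpt N i + ell N.
Proof. unfold cpt. rewrite S_INR. ring. Qed.

Lemma cpt_le N i j : (0 < N)%nat -> (i <= j)%nat -> cpt N i <= cpt N j.
Proof. intros HN Hij. unfold cpt. pose proof (ell_pos N HN). apply le_INR in Hij. nra. Qed.

Lemma cpt_0 N : cpt N 0 = a.
Proof. unfold cpt. simpl. ring. Qed.

Lemma cpt_N N : (0 < N)%nat -> cpt N N = b.
Proof. intros HN. unfold cpt, ell. pose proof (INR_pos N HN). field. lra. Qed.

Lemma cpt_in N i : (0 < N)%nat -> (i <= N)%nat -> a <= cpt N i <= b.
Proof.
  intros HN Hi. split.
  - rewrite <- (cpt_0 N). apply cpt_le; auto; lia.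
  - rewrite <- (cpt_N N HN). apply cpt_le; auto.
Qed.

Lemma ell_refine N q : (0 < N)%nat -> (0 < q)%nat -> ell N = INR q * ell (N * q).
Proof.
  intros HN Hq. unfold ell. rewrite mult_INR.
  pose proof (INR_pos N HN). pose proof (INR_pos q Hq). field. lra.
Qed.

Lemma cpt_refine N q i r : (0 < N)%nat -> (0 < q)%nat ->
  cpt (N * q) (i * q + r) = cpt N i + INR r * ell (N * q).
Proof.
  intros HN Hq. unfold cpt. rewrite (ell_refine N q HN Hq).
  rewrite plus_INR, mult_INR. ring.
Qed.

Lemma slope_ell N i : (0 < N)%nat -> ell N * slope N i = dF N i.
Proof. intros HN. unfold slope, dF. pose proof (ell_pos N HN). field. lra. Qed.

Lemma sub_sum N q i : (0 < N)%nat -> (0 < q)%nat ->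
  rsum (fun r => dF (N * q) (i * q + r)) q = dF N i.
Proof.
  intros HN Hq. unfold dF.
  rewrite (rsum_ext _ (fun r => F (cpt (N*q) (i * q + S r)) - F (cpt (N*q) (i*q + r)))).
  2:{ intros. f_equal. f_equal. f_equal. lia. }
  rewrite (rsum_telescope (fun r => F (cpt (N*q) (i * q + r)))).
  rewrite !cpt_refine by auto. rewrite <- (ell_refine N q HN Hq).
  simpl INR. rewrite Rmult_0_l, Rplus_0_r, <- cpt_S. reflexivity.
Qed.

Lemma AC_grid eps delta N (p : nat -> bool) : acp F a b eps delta -> (0 < N)%nat ->
  rsum (fun k => if p k then ell N else 0) N < delta ->
  rsum (fun k => if p k then Rabs (dF N k) else 0) N < eps.
Proof.
  intros Hac HN Hlen.
  set (u := fun k => cpt N k). set (v := fun k => if p k then cpt N (S k) else cpt N k).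
  specialize (Hac N u v).
  rewrite (rsum_ext _ (fun k => Rabs (F (v k) - F (u k)))).
  - apply Hac.
    + intros k Hk. unfold u, v. pose proof (cpt_in N k HN ltac:(lia)).
      pose proof (cpt_in N (S k) HN ltac:(lia)). rewrite cpt_S in *.
      pose proof (ell_pos N HN). destruct (p k); lra.
    + intros i j Hi Hj Hij. unfold u, v.
      destruct (Nat.lt_ge_cases i j).
      * left. apply Rle_trans with (cpt N (S i)).
        -- destruct (p i); [lra|]. apply cpt_le; auto.
        -- apply cpt_le; auto.
      * right. apply Rle_trans with (cpt N (S j)).
        -- destruct (p j); [lra|]. apply cpt_le; auto.
        -- apply cpt_le; auto; lia.
    + rewrite (rsum_ext _ (fun k => if p k then ell N else 0)); auto.
      intros k _. unfold u, v. destruct (p k); [rewrite cpt_S; ring|ring].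
  - intros k _. unfold u, v, dF. destruct (p k); [reflexivity|].
    replace (F (cpt N k) - F (cpt N k)) with 0 by ring. rewrite Rabs_R0. reflexivity.
Qed.

Lemma AC_double eps delta N q (p : nat -> nat -> bool) : acp F a b eps delta ->
  (0 < N)%nat -> (0 < q)%nat ->
  rsum (fun i => rsum (fun r => if p i r then ell (N * q) else 0) q) N < delta ->
  rsum (fun i => rsum (fun r => if p i r then Rabs (dF (N * q) (i * q + r)) else 0) q) N < eps.
Proof.
  intros Hac HN Hq Hlen.
  set (p' := fun k => p (k / q)%nat (k mod q)%nat).
  assert (Hdm : forall i r, (r < q)%nat -> ((i * q + r) / q = i /\ (i * q + r) mod q = r)%nat).
  { intros i r Hr. split.
    - rewrite Nat.div_add_l by lia. rewrite Nat.div_small by lia. lia.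
    - rewrite Nat.add_comm, Nat.Div0.mod_add. apply Nat.mod_small; lia. }
  pose proof (AC_grid eps delta (N * q) p' Hac ltac:(lia)) as H.
  rewrite !rsum_double in H.
  assert (E1 : forall (X : nat -> R), rsum (fun i => rsum (fun r => if p' (i * q + r)%nat then X (i * q + r)%nat else 0) q) N
              = rsum (fun i => rsum (fun r => if p i r then X (i * q + r)%nat else 0) q) N).
  { intros X. apply rsum_ext. intros i _. apply rsum_ext. intros r Hr.
    unfold p'. destruct (Hdm i r Hr) as [-> ->]. reflexivity. }
  rewrite (E1 (fun _ => ell (N * q))) in H. rewrite (E1 (fun k => Rabs (dF (N * q) k))) in H.
  apply H. exact Hlen.
Qed.

Hypothesis HAC : abs_cont_on F a b.

Lemma unif_cont kappa : 0 < kappa -> exists du, 0 < du /\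
  forall u v, a <= u <= b -> a <= v <= b -> Rabs (u - v) < du -> Rabs (F u - F v) < kappa.
Proof.
  intros Hk. destruct (HAC kappa Hk) as [d [Hd Hac]]. exists d. split; auto.
  intros u v Hu Hv Huv.
  destruct (Rle_dec u v).
  - specialize (Hac 1%nat (fun _ => u) (fun _ => v)). simpl in Hac.
    rewrite Rabs_minus_sym. replace (Rabs (F v - F u)) with (0 + Rabs (F v - F u)) by ring.
    apply Hac.
    + intros. lra.
    + intros. lia.
    + rewrite Rabs_minus_sym in Huv. rewrite Rabs_pos_eq in Huv by lra. lra.
  - specialize (Hac 1%nat (fun _ => v) (fun _ => u)). simpl in Hac.
    replace (Rabs (F u - F v)) with (0 + Rabs (F u - F v)) by ring.
    apply Hac.
    + intros. lra.
    + intros. lia.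
    + rewrite Rabs_pos_eq in Huv by lra. lra.
Qed.

Lemma cell_exists N t : (0 < N)%nat -> a <= t <= b ->
  exists i, (i < N)%nat /\ cpt N i <= t <= cpt N (S i).
Proof.
  intros HN Ht.
  assert (H : forall m, (1 <= m <= N)%nat -> t <= cpt N m ->
            exists i, (i < m)%nat /\ cpt N i <= t <= cpt N (S i)).
  { induction m; intros Hm Htm; [lia|].
    destruct (Nat.eq_dec m 0) as [->|Hm0].
    - exists O. rewrite cpt_0. split; [lia|lra].
    - destruct (Rle_dec t (cpt N m)).
      + destruct (IHm ltac:(lia) r) as [i [Hi Hi']]. exists i. split; [lia|auto].
      + exists m. split; [lia|lra]. }
  apply H; [lia|]. rewrite cpt_N; [lra|auto].
Qed.

Lemma PN_cell N i t : (0 < N)%nat -> (i < N)%nat -> cpt N i <= t <= cpt N (S i) ->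
  PN N t = F (cpt N i) + slope N i * (t - cpt N i).
Proof.
  intros HN Hi Ht. unfold PN.
  set (G := fun k => slope N k * ramp (cpt N k) (cpt N (S k)) t).
  pose proof (ell_pos N HN) as Hl.
  assert (H1 : forall m, (m <= i)%nat -> rsum G m = F (cpt N m) - F a).
  { induction m; intros Hm.
    - simpl. rewrite cpt_0. ring.
    - simpl. rewrite IHm by lia. unfold G.
      assert (ramp (cpt N m) (cpt N (S m)) t = ell N).
      { assert (cpt N (S m) <= t) by (apply Rle_trans with (cpt N i); [apply cpt_le|]; lra || lia).
        unfold ramp, Rmin, Rmax. rewrite cpt_S in *. repeat destruct Rle_dec; lra. }
      rewrite H. rewrite Rmult_comm, slope_ell by auto. unfold dF. ring. }
  assert (H2 : forall d, (i + S d <= N)%nat -> rsum G (i + S d) = F (cpt N i) - F a + slope N i * (t - cpt N i)).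
  { induction d; intros Hd.
    - rewrite Nat.add_1_r. simpl. rewrite H1 by lia. unfold G.
      replace (ramp (cpt N i) (cpt N (S i)) t) with (t - cpt N i).
      + ring.
      + unfold ramp, Rmin, Rmax. rewrite cpt_S in *. repeat destruct Rle_dec; lra.
    - replace (i + S (S d))%nat with (S (i + S d)) by lia. simpl.
      rewrite IHd by lia. unfold G.
      replace (ramp (cpt N (i + S d)) (cpt N (S (i + S d))) t) with 0.
      + ring.
      + assert (t <= cpt N (i + S d)) by (apply Rle_trans with (cpt N (S i)); [lra|apply cpt_le; auto; lia]).
        unfold ramp, Rmin, Rmax. rewrite cpt_S in *. repeat destruct Rle_dec; lra. }
  replace (rsum G N) with (rsum G (i + S (N - S i))) by (f_equal; lia). rewrite H2 by lia. ring.
Qed.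

Lemma PN_approx kappa : 0 < kappa -> exists N0, (0 < N0)%nat /\ forall N, (N0 <= N)%nat ->
  forall t, a <= t <= b -> Rabs (PN N t - F t) <= kappa.
Proof.
  intros Hk. destruct (unif_cont kappa Hk) as [du [Hdu Huc]].
  destruct (INR_archimed du (b - a) Hdu) as [N0 HN0].
  exists (S N0). split; [lia|]. intros N HN t Ht.
  assert (HNp : (0 < N)%nat) by lia.
  assert (Hell : ell N < du).
  { unfold ell. pose proof (INR_pos N HNp). apply Rmult_lt_reg_r with (INR N); auto.
    unfold Rdiv. rewrite Rmult_assoc, Rinv_l by lra.
    apply le_INR in HN. rewrite S_INR in HN. nra. }
  destruct (cell_exists N t HNp Ht) as [i [Hi Hit]].
  rewrite (PN_cell N i t HNp Hi Hit).
  pose proof (ell_pos N HNp). pose proof (cpt_S N i).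
  pose proof (cpt_in N i HNp ltac:(lia)). pose proof (cpt_in N (S i) HNp ltac:(lia)).
  set (th := (t - cpt N i) / ell N).
  assert (Hth : 0 <= th <= 1).
  { unfold th. split.
    - unfold Rdiv; apply Rmult_le_pos; [lra|left; apply Rinv_0_lt_compat; lra].
    - apply Rmult_le_reg_r with (ell N); auto. unfold Rdiv. rewrite Rmult_assoc, Rinv_l by lra. lra. }
  assert (Heq : F (cpt N i) + slope N i * (t - cpt N i) - F t =
                (1 - th) * (F (cpt N i) - F t) + th * (F (cpt N (S i)) - F t)).
  { unfold th, slope. field. lra. }
  rewrite Heq.
  assert (HA : Rabs (F (cpt N i) - F t) < kappa) by (apply Huc; try lra; rewrite Rabs_left1; lra).
  assert (HB : Rabs (F (cpt N (S i)) - F t) < kappa) by (apply Huc; try lra; rewrite Rabs_pos_eq; lra).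
  eapply Rle_trans; [apply Rabs_triang|]. rewrite !Rabs_mult.
  rewrite (Rabs_pos_eq th), (Rabs_pos_eq (1 - th)) by lra. nra.
Qed.

End Grid.

Notation ell_c := ell (only parsing).
Notation PN_c := PN (only parsing).
Definition Hub M s := if Rle_dec (Rabs s) M then s*s else 2*M*Rabs s - M*M.
Definition Hd M m := if Rle_dec (Rabs m) M then 2*m else if Rle_dec 0 m then 2*M else -(2*M).
Definition Bg M x m := Hub M x - Hub M m - Hd M m * (x - m).

Lemma Hub_bounds M s : 0 < M -> 0 <= Hub M s <= 2 * M * Rabs s.
Proof.
  intros HM. unfold Hub. pose proof (Rabs_pos s).
  destruct Rle_dec.
  - assert (Rabs s * Rabs s = s * s) by (unfold Rabs; destruct Rcase_abs; nra). nra.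
  - nra.
Qed.

Lemma Bg_nonneg M x m : 0 < M -> 0 <= Bg M x m.
Proof.
  intros HM. unfold Bg, Hub, Hd.
  destruct (Rle_dec (Rabs x) M) as [H1|H1]; destruct (Rle_dec (Rabs m) M) as [H2|H2]; try destruct (Rle_dec 0 m) as [H3|H3];
  revert H1 H2; unfold Rabs; destruct (Rcase_abs x); destruct (Rcase_abs m); intros.
  all: pose proof (Rle_0_sqr (x - m)); unfold Rsqr in *; try nra.
Qed.

Lemma Bg_lower M eta x m : 0 < M -> Rabs m <= M / 2 -> 0 < eta <= M / 2 ->
  Rabs (x - m) <= eta + Bg M x m / eta.
Proof.
  intros HM Hm He.
  assert (eta * Rabs (x - m) <= eta * eta + Bg M x m).
  { unfold Bg, Hub, Hd in *.
    destruct (Rle_dec (Rabs x) M) as [H1|H1]; destruct (Rle_dec (Rabs m) M) as [H2|H2]; try destruct (Rle_dec 0 m) as [H3|H3];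
    revert H1 H2 Hm; unfold Rabs; destruct (Rcase_abs x); destruct (Rcase_abs m); destruct (Rcase_abs (x - m)); intros.
    all: pose proof (Rle_0_sqr (x - m)); pose proof (Rle_0_sqr (Rabs (x - m) - eta)); unfold Rsqr in *; try nra.
    all: try (unfold Rabs in *; destruct Rcase_abs; nra). }
  apply Rmult_le_reg_l with eta; [lra|].
  replace (eta * (eta + Bg M x m / eta)) with (eta * eta + Bg M x m) by (field; lra). lra.
Qed.

Section RLsec.
Variables (F : R -> R) (a b : R).
Hypothesis Hab : a < b.

Notation ell := (ell a b).
Notation cpt := (cpt a b).
Notation slope := (slope F a b).
Notation dF := (dF F a b).
Notation PN := (PN F a b).

Definition Dpot M N := rsum (fun i => ell N * Hub M (slope N i)) N.

Lemma Jensen M N q : (0 < N)%nat -> (0 < q)%nat ->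
  Dpot M (N * q) - Dpot M N =
  rsum (fun i => rsum (fun r => ell (N * q) * Bg M (slope (N * q) (i * q + r)) (slope N i)) q) N.
Proof.
  intros HN Hq. unfold Dpot. rewrite rsum_double, <- rsum_minus. apply rsum_ext. intros i _.
  unfold Bg. symmetry.
  rewrite (rsum_ext _ (fun r => (ell (N*q) * Hub M (slope (N * q) (i * q + r)) - ell (N*q) * Hub M (slope N i))
         - Hd M (slope N i) * (dF (N * q) (i * q + r) - ell (N * q) * slope N i))).
  2:{ intros r _. rewrite <- (slope_ell F a b Hab (N * q)) by lia. ring. }
  rewrite (rsum_minus (fun r => ell (N*q) * Hub M (slope (N * q) (i * q + r)) - ell (N*q) * Hub M (slope N i))
                     (fun r => Hd M (slope N i) * (dF (N * q) (i * q + r) - ell (N * q) * slope N i))).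
  rewrite (rsum_minus (fun r => ell (N*q) * Hub M (slope (N * q) (i * q + r))) (fun r => ell (N*q) * Hub M (slope N i))).
  rewrite (rsum_scal (Hd M (slope N i))).
  rewrite (rsum_minus (fun r => dF (N * q) (i * q + r)) (fun r => ell (N * q) * slope N i)).
  rewrite !rsum_const, (sub_sum F a b) by auto.
  rewrite <- (slope_ell F a b Hab N) by auto. rewrite (ell_refine a b N q HN Hq). ring.
Qed.

Lemma Dpot_mono M N q : 0 < M -> (0 < N)%nat -> (0 < q)%nat -> Dpot M N <= Dpot M (N * q).
Proof.
  intros HM HN Hq. assert (0 <= Dpot M (N * q) - Dpot M N); [|lra].
  rewrite Jensen by auto. apply rsum_nonneg. intros i _. apply rsum_nonneg. intros r _.
  apply Rmult_le_pos; [left; apply ell_pos; auto; lia|apply Bg_nonneg; auto].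
Qed.

Lemma Dpot_bound M N : 0 < M -> (0 < N)%nat ->
  Dpot M N <= 2 * M * rsum (fun i => Rabs (dF N i)) N.
Proof.
  intros HM HN. unfold Dpot. rewrite <- rsum_scal. apply rsum_le. intros i _.
  rewrite <- (slope_ell F a b Hab N) by auto. rewrite Rabs_mult.
  pose proof (ell_pos a b Hab N HN). rewrite (Rabs_pos_eq (ell N)) by lra.
  pose proof (Hub_bounds M (slope N i) HM). nra.
Qed.

Definition bad M N i := if Rle_dec (Rabs (slope N i)) (M / 2) then false else true.

Lemma est eps delta N q M eta W : acp F a b eps delta -> (0 < N)%nat -> (0 < q)%nat ->
  0 < M -> 0 < eta <= M / 2 -> rsum (fun i => Rabs (dF N i)) N <= W -> 2 * W / M < delta ->
  rsum (fun i => rsum (fun r => ell (N * q) * Rabs (slope (N * q) (i * q + r) - slope N i)) q) N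
  <= eta * (b - a) + (Dpot M (N * q) - Dpot M N) / eta + 2 * eps.
Proof.
  intros Hac HN Hq HM Heta HW HWd.
  pose proof (ell_pos a b Hab N HN) as Hl. pose proof (ell_pos a b Hab (N*q) ltac:(lia)) as Hl'.
  set (Bs := fun i => rsum (fun r => ell (N * q) * Bg M (slope (N * q) (i * q + r)) (slope N i)) q).
  assert (HBs : forall i, 0 <= Bs i).
  { intros i. apply rsum_nonneg. intros. apply Rmult_le_pos; [lra|apply Bg_nonneg; auto]. }
  assert (Hper : forall i, (i < N)%nat ->
     rsum (fun r => ell (N * q) * Rabs (slope (N * q) (i * q + r) - slope N i)) q <=
     eta * ell N + / eta * Bs i
     + rsum (fun r => if bad M N i then Rabs (dF (N * q) (i * q + r)) else 0) q
     + (if bad M N i then Rabs (dF N i) else 0)).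
  { intros i Hi. rewrite rsum_if. unfold bad. destruct Rle_dec as [Hg|Hb].
    - eapply Rle_trans with (rsum (fun r => eta * ell (N * q) + / eta * (ell (N * q) * Bg M (slope (N * q) (i * q + r)) (slope N i))) q).
      + apply rsum_le. intros r _.
        pose proof (Bg_lower M eta (slope (N * q) (i * q + r)) (slope N i) HM Hg Heta).
        replace (eta * ell (N * q) + / eta * (ell (N * q) * Bg M (slope (N * q) (i * q + r)) (slope N i)))
          with (ell (N * q) * (eta + Bg M (slope (N * q) (i * q + r)) (slope N i) / eta)) by (field; lra).
        apply Rmult_le_compat_l; lra.
      + rewrite rsum_plus, rsum_const, rsum_scal. fold (Bs i).
        rewrite (ell_refine a b N q HN Hq). lra.
    - assert (Hs : rsum (fun r => ell (N * q) * Rabs (slope (N * q) (i * q + r) - slope N i)) q <=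
                 rsum (fun r => Rabs (dF (N * q) (i * q + r))) q + Rabs (dF N i)).
      { eapply Rle_trans with (rsum (fun r => Rabs (dF (N * q) (i * q + r)) + ell (N * q) * Rabs (slope N i)) q).
        - apply rsum_le. intros r _. rewrite <- (slope_ell F a b Hab (N * q)) by lia.
          rewrite Rabs_mult, (Rabs_pos_eq (ell (N * q))) by lra.
          rewrite <- Rmult_plus_distr_l. apply Rmult_le_compat_l; [lra|].
          eapply Rle_trans; [apply Rabs_triang|]. rewrite Rabs_Ropp. lra.
        - rewrite rsum_plus, rsum_const. rewrite <- (slope_ell F a b Hab N) by auto.
          rewrite Rabs_mult, (Rabs_pos_eq (ell N)) by lra. rewrite (ell_refine a b N q HN Hq). lra. }
      pose proof (HBs i). assert (0 <= / eta * Bs i) by (apply Rmult_le_pos; [left; apply Rinv_0_lt_compat; lra|auto]).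
      nra. }
  eapply Rle_trans; [apply rsum_le; exact Hper|].
  rewrite !rsum_plus, rsum_const, rsum_scal.
  assert (HNl : INR N * ell N = b - a) by (unfold ell_c; pose proof (INR_pos N HN); field; lra).
  assert (HBsum : rsum Bs N = Dpot M (N * q) - Dpot M N) by (rewrite Jensen; auto).
  rewrite HBsum.
  assert (Hlen : rsum (fun i => if bad M N i then ell N else 0) N < delta).
  { eapply Rle_lt_trans; [|exact HWd].
    apply Rle_trans with (rsum (fun i => 2 / M * Rabs (dF N i)) N).
    - apply rsum_le. intros i _. unfold bad. destruct Rle_dec as [Hg|Hb].
      + apply Rmult_le_pos; [|apply Rabs_pos]. apply Rmult_le_pos; [lra|left; apply Rinv_0_lt_compat; lra].
      + rewrite <- (slope_ell F a b Hab N) by auto. rewrite Rabs_mult, (Rabs_pos_eq (ell N)) by lra.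
        apply Rnot_le_lt in Hb.
        assert (E : 2 / M * (ell N * Rabs (slope N i)) - ell N = ell N * (2 * Rabs (slope N i) - M) / M) by (field; lra).
        assert (0 <= ell N * (2 * Rabs (slope N i) - M) / M).
        { unfold Rdiv. apply Rmult_le_pos; [apply Rmult_le_pos; lra|left; apply Rinv_0_lt_compat; lra]. }
        lra.
    - rewrite rsum_scal. unfold Rdiv. assert (0 < / M) by (apply Rinv_0_lt_compat; lra). nra. }
  assert (H1 : rsum (fun i => if bad M N i then Rabs (dF N i) else 0) N < eps)
    by (apply (AC_grid F a b Hab eps delta N); auto).
  assert (H2 : rsum (fun i => rsum (fun r => if bad M N i then Rabs (dF (N * q) (i * q + r)) else 0) q) N < eps).
  { apply (AC_double F a b Hab eps delta N q (fun i _ => bad M N i)); auto.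
    erewrite rsum_ext; [exact Hlen|]. intros i _. rewrite rsum_if, rsum_const.
    rewrite (ell_refine a b N q HN Hq). reflexivity. }
  replace (INR N * (eta * ell N)) with (eta * (b - a)) by (rewrite <- HNl; ring).
  unfold Rdiv. rewrite (Rmult_comm _ (/ eta)). lra.
Qed.

End RLsec.

Lemma mono_bounded (d : nat -> R) j0 U th : 0 < th ->
  (forall j k, (j0 <= j)%nat -> (j <= k)%nat -> d j <= d k) ->
  (forall j, (j0 <= j)%nat -> d j <= U) ->
  exists j, (j0 <= j)%nat /\ forall k, (j <= k)%nat -> d k - d j <= th.
Proof.
  intros Hth Hm Hb. apply NNPP. intros Hn.
  assert (Hall : forall j, (j0 <= j)%nat -> exists k, (j <= k)%nat /\ d k - d j > th).
  { intros j Hj. apply NNPP. intros Hk. apply Hn. exists j. split; auto.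
    intros k Hjk. apply Rnot_gt_le. intros Hgt. apply Hk. exists k. auto. }
  assert (Hr : forall r, exists j, (j0 <= j)%nat /\ d j >= d j0 + INR r * th).
  { induction r.
    - exists j0. simpl. split; [lia|lra].
    - destruct IHr as [j [Hj Hdj]]. destruct (Hall j Hj) as [k [Hk Hdk]].
      exists k. split; [lia|]. rewrite S_INR. lra. }
  destruct (INR_archimed th (U - d j0) Hth) as [r Hr'].
  destruct (Hr r) as [j [Hj Hdj]]. specialize (Hb j Hj). lra.
Qed.

Lemma Asum_double_bound z0 sg m (w : nat -> nat -> R) (rho : nat -> nat -> R -> R) N q :
  Rabs (Asum z0 sg m (fun t => rsum (fun i => rsum (fun r => w i r * rho i r t) q) N)) <=
  rsum (fun i => rsum (fun r => Rabs (w i r) * Rabs (Asum z0 sg m (rho i r))) q) N.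
Proof.
  rewrite (Asum_ext z0 sg m _ (fun t => rsum (fun i => 1 * (fun i t => rsum (fun r => w i r * rho i r t) q) i t) N))
    by (intros; apply rsum_ext; intros; ring).
  eapply Rle_trans; [apply Asum_sum_bound|]. apply rsum_le. intros i _.
  rewrite Rabs_R1, Rmult_1_l. apply Asum_sum_bound.
Qed.

Section RL2.
Variables (F : R -> R) (a b : R).
Hypothesis Hab : a < b.
Hypothesis HAC : abs_cont_on F a b.

Notation ell := (ell a b).
Notation cpt := (cpt a b).
Notation slope := (slope F a b).
Notation dF := (dF F a b).
Notation PN := (PN F a b).

Lemma W_bound : exists W j0, 0 <= W /\ forall j, (j0 <= j)%nat ->
  rsum (fun i => Rabs (dF (2 ^ j) i)) (2 ^ j) <= W.
Proof.
  destruct (HAC 1 Rlt_0_1) as [d1 [Hd1 Hac1]].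
  destruct (INR_archimed d1 (b - a) Hd1) as [N HN].
  set (N0 := (2 ^ N)%nat).
  assert (HN0 : (0 < N0)%nat) by (pose proof (pow2_gt N); unfold N0; lia).
  exists (INR N0), N. split; [apply pos_INR|]. intros j Hj.
  set (q := (2 ^ (j - N))%nat).
  assert (Hq : (0 < q)%nat) by (pose proof (pow2_gt (j - N)); unfold q; lia).
  replace (2 ^ j)%nat with (N0 * q)%nat by (unfold N0, q; rewrite <- Nat.pow_add_r; f_equal; lia).
  rewrite rsum_double. rewrite <- (Rmult_1_r (INR N0)), <- rsum_const.
  apply rsum_le. intros i Hi. left.
  pose proof (AC_double F a b Hab 1 d1 N0 q (fun i' _ => Nat.eqb i' i) Hac1 HN0 Hq) as H.
  rewrite (rsum_ext (fun i0 => rsum (fun r => if Nat.eqb i0 i then Rabs (dF (N0 * q) (i0 * q + r)) else 0) q)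
            (fun i0 => if Nat.eqb i0 i then rsum (fun r => Rabs (dF (N0 * q) (i0 * q + r))) q else 0)) in H
    by (intros; apply rsum_if).
  rewrite (rsum_delta (fun i0 => rsum (fun r => Rabs (dF (N0 * q) (i0 * q + r))) q)) in H by auto.
  apply H.
  rewrite (rsum_ext _ (fun i0 => if Nat.eqb i0 i then rsum (fun r => ell (N0 * q)) q else 0)) by (intros; apply rsum_if).
  rewrite (rsum_delta (fun i0 => rsum (fun r => ell (N0 * q)) q)) by auto.
  rewrite rsum_const, <- (ell_refine a b N0 q HN0 Hq).
  unfold ell_c. pose proof (INR_pos N0 HN0).
  assert (INR N <= INR N0) by (apply le_INR; pose proof (pow2_gt N); unfold N0; lia).
  apply Rmult_lt_reg_r with (INR N0); auto. unfold Rdiv. rewrite Rmult_assoc, Rinv_l by lra. nra.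
Qed.

Lemma PN_diff N q t : (0 < N)%nat -> (0 < q)%nat ->
  PN (N * q) t - PN N t =
  rsum (fun i => rsum (fun r => (slope (N * q) (i * q + r) - slope N i) *
            ramp (cpt (N * q) (i * q + r)) (cpt (N * q) (S (i * q + r))) t) q) N.
Proof.
  intros HN Hq. unfold PN_c. rewrite rsum_double.
  assert (Hr : forall i, slope N i * ramp (cpt N i) (cpt N (S i)) t =
      rsum (fun r => slope N i * ramp (cpt (N * q) (i * q + r)) (cpt (N * q) (S (i * q + r))) t) q).
  { intros i. rewrite rsum_scal. f_equal.
    rewrite cpt_S, (ell_refine a b N q HN Hq).
    rewrite (ramp_decomp (cpt N i) (ell (N * q)) t) by (left; apply ell_pos; auto; lia).
    apply rsum_ext. intros r _. rewrite <- Nat.add_succ_r, !cpt_refine by auto. reflexivity. }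
  rewrite (rsum_ext (fun i => slope N i * ramp (cpt N i) (cpt N (S i)) t) _ N (fun i _ => Hr i)).
  match goal with |- F a + ?A - (F a + ?B) = _ => transitivity (A - B); [ring|] end.
  rewrite <- rsum_minus. apply rsum_ext. intros i _. rewrite <- rsum_minus. apply rsum_ext. intros. ring.
Qed.

End RL2.

Theorem RL F a b : a < b -> abs_cont_on F a b ->
  forall eps, 0 < eps -> exists eta, 0 < eta /\
  forall sg z0 m, 0 <= sg <= eta -> a <= z0 -> z0 + INR m * sg <= b ->
  Rabs (Asum z0 sg m F) <= eps.
Proof.
  intros Hab HAC eps Heps.
  set (e1 := eps / 6). assert (He1 : 0 < e1) by (unfold e1; lra).
  destruct (HAC e1 He1) as [delta [Hd Hac]].
  destruct (W_bound F a b Hab HAC) as [W [j0 [HW0 HW]]].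
  set (M := 2 * W / delta + 2 * e1 / (b - a) + 1).
  assert (HWd0 : 0 <= 2 * W / delta) by (unfold Rdiv; apply Rmult_le_pos; [lra|left; apply Rinv_0_lt_compat; lra]).
  assert (He0 : 0 < 2 * e1 / (b - a)) by (unfold Rdiv; apply Rmult_lt_0_compat; [lra|apply Rinv_0_lt_compat; lra]).
  assert (HM : 0 < M) by (unfold M; lra).
  assert (HWM : 2 * W / M < delta).
  { apply Rmult_lt_reg_r with M; auto. unfold Rdiv at 1. rewrite Rmult_assoc, Rinv_l by lra.
    assert (2 * W = delta * (2 * W / delta)) by (field; lra).
    unfold M. nra. }
  set (eta0 := e1 / (b - a)).
  assert (Heta0 : 0 < eta0 <= M / 2).
  { unfold eta0. split; [unfold Rdiv; apply Rmult_lt_0_compat; [lra|apply Rinv_0_lt_compat; lra]|].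
    unfold M. unfold Rdiv in *. lra. }
  set (th := eta0 * e1).
  assert (Hth : 0 < th) by (unfold th; nra).
  destruct (mono_bounded (fun j => Dpot F a b M (2 ^ j)) j0 (2 * M * W) th Hth) as [j [Hj Hjk]].
  { intros j k Hj Hk. replace (2 ^ k)%nat with (2 ^ j * 2 ^ (k - j))%nat by (rewrite <- Nat.pow_add_r; f_equal; lia).
    apply Dpot_mono; auto; pose proof (pow2_gt j); pose proof (pow2_gt (k - j)); lia. }
  { intros j Hj. eapply Rle_trans; [apply Dpot_bound; auto; pose proof (pow2_gt j); lia|].
    specialize (HW j Hj). nra. }
  set (Nj := (2 ^ j)%nat). assert (HNj : (0 < Nj)%nat) by (pose proof (pow2_gt j); unfold Nj; lia).
  set (Sj := rsum (fun i => Rabs (slope F a b Nj i)) Nj).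
  assert (HSj : 0 <= Sj) by (apply rsum_nonneg; intros; apply Rabs_pos).
  exists (e1 / (2 * Sj + 1)). split; [unfold Rdiv; apply Rmult_lt_0_compat; [lra|apply Rinv_0_lt_compat; lra]|].
  intros sg z0 m Hsg Hz0 Hzm.
  assert (Hgrid : forall l, (l <= m)%nat -> a <= z0 + INR l * sg <= b).
  { intros l Hl. apply le_INR in Hl. pose proof (pos_INR l). split; nra. }
  set (kappa := e1 / (2 * INR m + 1)).
  assert (Hk : 0 < kappa) by (unfold kappa; pose proof (pos_INR m); unfold Rdiv; apply Rmult_lt_0_compat; [lra|apply Rinv_0_lt_compat; lra]).
  destruct (PN_approx F a b Hab HAC kappa Hk) as [N0 [HN0 Happ]].
  set (q := (2 ^ N0)%nat). assert (Hq : (0 < q)%nat) by (pose proof (pow2_gt N0); unfold q; lia).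
  assert (HNq : (N0 <= Nj * q)%nat).
  { unfold Nj, q. rewrite <- Nat.pow_add_r. pose proof (pow2_gt (j + N0)). lia. }
  rewrite (Asum_ext z0 sg m F (fun t => (F t - PN F a b (Nj * q) t) + (PN F a b (Nj * q) t - PN F a b Nj t) + PN F a b Nj t))
    by (intros; ring).
  rewrite !Asum_plus.
  assert (H1 : Rabs (Asum z0 sg m (fun t => F t - PN F a b (Nj * q) t)) <= e1).
  { eapply Rle_trans; [apply (Asum_pw z0 sg m _ kappa)|].
    - intros l Hl. rewrite Rabs_minus_sym. apply Happ; auto.
    - unfold kappa. pose proof (pos_INR m).
      apply Rle_trans with (e1 * ((2 * INR m) / (2 * INR m + 1))); [right; field; lra|].
      rewrite <- (Rmult_1_r e1) at 2. apply Rmult_le_compat_l; [lra|].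
      apply Rmult_le_reg_r with (2 * INR m + 1); [lra|]. unfold Rdiv. rewrite Rmult_assoc, Rinv_l by lra. lra. }
  assert (H2 : Rabs (Asum z0 sg m (fun t => PN F a b (Nj * q) t - PN F a b Nj t)) <= 4 * e1).
  { rewrite (Asum_ext z0 sg m _ _ (fun t => PN_diff F a b Hab Nj q t HNj Hq)).
    eapply Rle_trans; [apply Asum_double_bound|].
    eapply Rle_trans with (rsum (fun i => rsum (fun r => ell a b (Nj * q) * Rabs (slope F a b (Nj * q) (i * q + r) - slope F a b Nj i)) q) Nj).
    - apply rsum_le. intros i _. apply rsum_le. intros r _. rewrite (Rmult_comm (ell a b (Nj * q))).
      apply Rmult_le_compat_l; [apply Rabs_pos|].
      eapply Rle_trans; [apply Asum_ramp1; [lra|]|].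
      + apply cpt_le; auto; lia.
      + rewrite cpt_S. lra.
    - eapply Rle_trans; [apply (est F a b Hab e1 delta Nj q M eta0 W); auto|].
      + apply HW. unfold Nj. auto.
      + assert (Hdd : Dpot F a b M (Nj * q) - Dpot F a b M Nj <= th).
        { unfold Nj, q. rewrite <- Nat.pow_add_r. apply Hjk. lia. }
        assert (Dpot F a b M (Nj * q) - Dpot F a b M Nj <= eta0 * e1) by (unfold th in Hdd; lra).
        assert ((Dpot F a b M (Nj * q) - Dpot F a b M Nj) / eta0 <= e1).
        { apply Rmult_le_reg_r with eta0; [lra|]. unfold Rdiv. rewrite Rmult_assoc, Rinv_l by lra. lra. }
        assert (eta0 * (b - a) = e1) by (unfold eta0; field; lra).
        lra. }
  assert (H3 : Rabs (Asum z0 sg m (PN F a b Nj)) <= e1).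
  { unfold PN_c. rewrite Asum_plus, Asum_const, Rplus_0_l.
    eapply Rle_trans; [apply Asum_sum_bound|].
    apply Rle_trans with (rsum (fun i => Rabs (slope F a b Nj i) * (2 * sg)) Nj).
    - apply rsum_le. intros i _. apply Rmult_le_compat_l; [apply Rabs_pos|].
      apply Asum_ramp2; [lra|]. apply cpt_le; auto.
    - rewrite (rsum_ext _ (fun i => (2 * sg) * Rabs (slope F a b Nj i))) by (intros; ring).
      rewrite rsum_scal. fold Sj.
      assert (sg * (2 * Sj + 1) <= e1).
      { destruct Hsg as [_ Hsg]. apply Rmult_le_compat_r with (r := 2 * Sj + 1) in Hsg; [|lra].
        unfold Rdiv in Hsg. rewrite Rmult_assoc, Rinv_l in Hsg by lra. lra. }
      nra. }
  eapply Rle_trans; [apply Rabs_triang|].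
  eapply Rle_trans; [apply Rplus_le_compat_r; apply Rabs_triang|].
  unfold e1 in *. lra.
Qed.

Section Berrut.
Variable n : nat.
Hypothesis Hn : (0 < n)%nat.

Let hh := 2 / INR n.
Lemma INRn_pos : 0 < INR n. Proof. apply lt_0_INR; lia. Qed.

Lemma node_alt k : node n k = -1 + INR k * (2 / INR n).
Proof. unfold node. pose proof INRn_pos. field. lra. Qed.

Lemma node_0 : node n 0 = -1.
Proof. rewrite node_alt. simpl. ring. Qed.

Lemma node_n : node n n = 1.
Proof. unfold node. pose proof INRn_pos. field_simplify; [|lra]. reflexivity. Qed.

Lemma h_pos : 0 < 2 / INR n.
Proof. pose proof INRn_pos. unfold Rdiv. apply Rmult_lt_0_compat; [lra|apply Rinv_0_lt_compat; lra]. Qed.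

Lemma node_le i j : (i <= j)%nat -> node n i <= node n j.
Proof. intros H. rewrite !node_alt. apply le_INR in H. pose proof h_pos. nra. Qed.

Lemma node_in k : (k <= n)%nat -> -1 <= node n k <= 1.
Proof. intros. rewrite <- node_0, <- node_n. split; apply node_le; lia. Qed.

Lemma node_S k : node n (S k) = node n k + 2 / INR n.
Proof. rewrite !node_alt, S_INR. ring. Qed.

Lemma node_index_none x : ~ is_node n x -> forall m, (m <= S n)%nat -> node_index n x m = None.
Proof.
  intros Hx m. induction m; intros Hm; simpl; auto.
  rewrite IHm by lia. destruct (Req_EM_T x (node n m)); auto.
  exfalso. apply Hx. exists m. split; [lia|auto].
Qed.

Lemma Bn_eq f x : ~ is_node n x -> Bn n f x = Nn n f x / Dn n x.
Proof. intros Hx. unfold Bn. rewrite node_index_none; auto. Qed.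

Lemma not_node_neq x k : ~ is_node n x -> (k <= n)%nat -> x - node n k <> 0.
Proof. intros Hx Hk E. apply Hx. exists k. split; auto. lra. Qed.

Lemma cell_node x : -1 < x < 1 -> ~ is_node n x ->
  exists j, (j < n)%nat /\ node n j < x < node n (S j).
Proof.
  intros Hx Hnn.
  assert (H : forall m, (m <= n)%nat -> x <= node n m -> exists j, (j < m)%nat /\ node n j < x <= node n (S j)).
  { induction m; intros Hm Hxm.
    - rewrite node_0 in Hxm. lra.
    - destruct (Rle_dec x (node n m)).
      + destruct (IHm ltac:(lia) r) as [j [Hj Hj']]. exists j. split; [lia|auto].
      + exists m. split; [lia|lra]. }
  destruct (H n ltac:(lia)) as [j [Hj [Hj1 Hj2]]]; [rewrite node_n; lra|].
  exists j. split; auto. split; auto. destruct Hj2; auto.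
  exfalso. apply Hnn. exists (S j). split; [lia|auto].
Qed.

Lemma pow_m1_S k : (-1) ^ (S k) = - (-1) ^ k.
Proof. simpl. ring. Qed.

Lemma D_lower x : -1 < x < 1 -> ~ is_node n x -> 2 * INR n / 3 <= Rabs (Dn n x).
Proof.
  intros Hx Hnn. destruct (cell_node x Hx Hnn) as [j [Hj [Hj1 Hj2]]].
  set (h := 2 / INR n). assert (Hh : 0 < h) by apply h_pos.
  set (t := x - node n j).
  assert (Ht : 0 < t < h) by (unfold t, h; rewrite node_S in Hj2; lra).
  unfold Dn.
  replace (S n) with (S j + (n - j))%nat by lia. rewrite rsum_add.
  set (bL := fun i => / (t + INR i * h)).
  set (bR := fun i => / ((h - t) + INR i * h)).
  assert (EL : rsum (fun k => (-1) ^ k / (x - node n k)) (S j) = (-1) ^ j * Palt bL (S j)).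
  { rewrite rsum_rev. unfold Palt. rewrite <- rsum_scal. apply rsum_ext. intros i Hi.
    replace (S j - 1 - i)%nat with (j - i)%nat by lia.
    assert (Hn1 : x - node n (j - i) = t + INR i * h).
    { unfold t, h. rewrite !node_alt. rewrite minus_INR by lia. ring. }
    rewrite Hn1. unfold bL.
    replace ((-1) ^ j) with ((-1) ^ (j - i) * (-1) ^ i) by (rewrite <- pow_add; f_equal; lia).
    unfold Rdiv. rewrite <- Rmult_assoc, (Rmult_assoc ((-1)^(j-i))), pow_m1_sq. ring. }
  assert (ER : rsum (fun k => (-1) ^ (S j + k) / (x - node n (S j + k))) (n - j) = (-1) ^ j * Palt bR (n - j)).
  { unfold Palt. rewrite <- rsum_scal. apply rsum_ext. intros i Hi.
    assert (Hn1 : x - node n (S j + i) = - ((h - t) + INR i * h)).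
    { unfold t, h. rewrite !node_alt. rewrite plus_INR, S_INR. ring. }
    rewrite Hn1. unfold bR. rewrite pow_add, pow_m1_S.
    assert (0 < (h - t) + INR i * h) by (pose proof (pos_INR i); nra).
    field. lra. }
  rewrite EL, ER.
  assert (HbL : forall i, 0 <= bL i) by (intros; unfold bL; left; apply Rinv_0_lt_compat; pose proof (pos_INR i); nra).
  assert (HbR : forall i, 0 <= bR i) by (intros; unfold bR; left; apply Rinv_0_lt_compat; pose proof (pos_INR i); nra).
  assert (HdL : forall i, bL (S i) <= bL i).
  { intros. unfold bL. apply Rinv_le_contravar; [pose proof (pos_INR i); nra|rewrite S_INR; lra]. }
  assert (HdR : forall i, bR (S i) <= bR i).
  { intros. unfold bR. apply Rinv_le_contravar; [pose proof (pos_INR i); nra|rewrite S_INR; lra]. }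
  destruct (Palt_bounds (S j) bL HbL HdL) as [[PL0 _] PL1].
  destruct (Palt_bounds (n - j) bR HbR HdR) as [[PR0 _] PR1].
  specialize (PL1 ltac:(lia)). specialize (PR1 ltac:(lia)).
  rewrite <- Rmult_plus_distr_l, Rabs_mult, pow_m1_abs, Rmult_1_l.
  rewrite Rabs_pos_eq by lra.
  assert (HI : INR n = 2 / h) by (unfold h; pose proof INRn_pos; field; lra).
  assert (EbL : forall i, bL i = / (t + INR i * h)) by reflexivity.
  assert (EbR : forall i, bR i = / ((h - t) + INR i * h)) by reflexivity.
  clearbody h t bL bR.
  assert (Hbnd : forall s, 0 < s <= h / 2 -> 2 * INR n / 3 <= / (s + INR 0 * h) - / (s + INR 1 * h)).
  { intros s Hs. simpl INR.
    assert (Hp : 0 < s * (s + h)) by (apply Rmult_lt_0_compat; lra).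
    replace (/ (s + 0 * h) - / (s + 1 * h)) with (h / (s * (s + h))) by (field; lra).
    rewrite HI. apply Rmult_le_reg_r with (3 * h * (s * (s + h))).
    { apply Rmult_lt_0_compat; [lra|auto]. }
    replace (2 * (2 / h) / 3 * (3 * h * (s * (s + h)))) with (4 * (s * (s + h))) by (field; lra).
    replace (h / (s * (s + h)) * (3 * h * (s * (s + h)))) with (3 * h * h) by (field; lra).
    assert (0 <= (h - 2 * s) * (3 * h + 2 * s)) by (apply Rmult_le_pos; lra). lra. }
  destruct (Rle_dec t (h / 2)).
  - specialize (Hbnd t ltac:(lra)). rewrite !EbL in PL1. lra.
  - specialize (Hbnd (h - t) ltac:(lra)). rewrite !EbR in PR1. lra.
Qed.

Definition gdd f x k := (f (node n k) - f x) / (node n k - x).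
Definition Tsum f x := rsum (fun k => (-1) ^ k * gdd f x k) (S n) - (gdd f x 0 + (-1) ^ n * gdd f x n) / 2.

Lemma num_identity f x : ~ is_node n x ->
  Nn n f x - f x * Dn n x = - rsum (fun k => (-1) ^ k * gdd f x k) (S n).
Proof.
  intros Hnn. unfold Nn, Dn. rewrite <- rsum_scal, <- rsum_minus.
  match goal with |- _ = - rsum ?C _ => replace (- rsum C (S n)) with (rsum (fun k => -1 * C k) (S n)) by (rewrite rsum_scal; ring) end.
  apply rsum_ext. intros k Hk. unfold gdd.
  pose proof (not_node_neq x k Hnn ltac:(lia)).
  field. split; lra.
Qed.

Lemma pow_odd k : Nat.Odd k -> (-1) ^ k = -1.
Proof. intros [p ->]. rewrite pow_add, pow_mult. replace ((-1)^2) with 1 by (simpl; ring). rewrite pow1. simpl. ring. Qed.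

Lemma pow_even k : Nat.Even k -> (-1) ^ k = 1.
Proof. intros [p ->]. rewrite pow_mult. replace ((-1)^2) with 1 by (simpl; ring). apply pow1. Qed.

Lemma key_odd f x : -1 < x < 1 -> ~ is_node n x -> Nat.Odd n ->
  Bn n f x - f x - Ofun f x / Dn n x = - Tsum f x / Dn n x.
Proof.
  intros Hx Hnn Hod. rewrite Bn_eq by auto.
  assert (HD : Dn n x <> 0) by (pose proof (D_lower x Hx Hnn); pose proof INRn_pos; intro E; rewrite E, Rabs_R0 in H; lra).
  assert (E1 : Nn n f x = f x * Dn n x - rsum (fun k => (-1) ^ k * gdd f x k) (S n)) by (pose proof (num_identity f x Hnn); lra).
  rewrite E1. unfold Tsum, Ofun, gdd. rewrite pow_odd by auto. rewrite node_0, node_n.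
  field. repeat split; lra.
Qed.

Lemma key_even f x : -1 < x < 1 -> ~ is_node n x -> Nat.Even n ->
  Bn n f x - f x - Efun f x / Dn n x = - Tsum f x / Dn n x.
Proof.
  intros Hx Hnn Hev. rewrite Bn_eq by auto.
  assert (HD : Dn n x <> 0) by (pose proof (D_lower x Hx Hnn); pose proof INRn_pos; intro E; rewrite E, Rabs_R0 in H; lra).
  assert (E1 : Nn n f x = f x * Dn n x - rsum (fun k => (-1) ^ k * gdd f x k) (S n)) by (pose proof (num_identity f x Hnn); lra).
  rewrite E1. unfold Tsum, Efun, gdd. rewrite pow_even by auto. rewrite node_0, node_n.
  field. repeat split; lra.
Qed.

End Berrut.

Definition clamp t := Rmax (-1) (Rmin t 1).
Definition ft (f : R -> R) t := f (clamp t).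

Lemma clamp_in t : -1 <= clamp t <= 1.
Proof. unfold clamp, Rmax, Rmin. repeat destruct Rle_dec; lra. Qed.

Lemma clamp_id t : -1 <= t <= 1 -> clamp t = t.
Proof. intros. unfold clamp, Rmax, Rmin. repeat destruct Rle_dec; lra. Qed.

Lemma clamp_lip t s : Rabs (clamp t - clamp s) <= Rabs (t - s).
Proof. unfold clamp, Rmax, Rmin, Rabs. repeat destruct Rle_dec; repeat destruct Rcase_abs; lra. Qed.

Lemma dpl_ext f g x l : (forall t, f t = g t) -> derivable_pt_lim f x l -> derivable_pt_lim g x l.
Proof.
  intros H Hf eps Heps. destruct (Hf eps Heps) as [d Hd]. exists d. intros h Hh Hhd.
  rewrite <- !H. apply Hd; auto.
Qed.

Lemma dpl_affine x d u : derivable_pt_lim (fun u => x + u * d) u d.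
Proof.
  intros eps Heps. exists (mkposreal 1 Rlt_0_1). intros h Hh _.
  replace ((x + (u + h) * d - (x + u * d)) / h - d) with 0 by (field; auto).
  rewrite Rabs_R0. auto.
Qed.

Lemma dpl_rsum (G : nat -> R -> R) G' m u :
  (forall k, (k < m)%nat -> derivable_pt_lim (G k) u (G' k)) ->
  derivable_pt_lim (fun u => rsum (fun k => G k u) m) u (rsum G' m).
Proof.
  induction m; intros H.
  - simpl. apply (dpl_ext (fct_cte 0)); [intros; reflexivity|apply derivable_pt_lim_const].
  - simpl. apply (dpl_ext ((fun u => rsum (fun k => G k u) m) + G m)%F); [intros; reflexivity|].
    apply derivable_pt_lim_plus; [apply IHm; intros; apply H; lia|apply H; lia].
Qed.

Lemma cont_rsum (G : nat -> R -> R) m u :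
  (forall k, (k < m)%nat -> continuity_pt (G k) u) ->
  continuity_pt (fun u => rsum (fun k => G k u) m) u.
Proof.
  induction m; intros H.
  - simpl. apply continuity_pt_const. intros ? ?. reflexivity.
  - simpl. apply (continuity_pt_ext ((fun u => rsum (fun k => G k u) m) + G m)%F); [intros; reflexivity|].
    apply continuity_pt_plus; [apply IHm; intros; apply H; lia|apply H; lia].
Qed.

Lemma alt_identity (G : nat -> R) n :
  rsum (fun k => (-1) ^ k * G k) (S n) - (G O + (-1) ^ n * G n) / 2 =
  - (1 / 2) * rsum (fun l => (-1) ^ l * (G (S l) - G l)) n.
Proof.
  induction n.
  - simpl. field.
  - change (rsum (fun k => (-1) ^ k * G k) (S (S n))) with
      (rsum (fun k => (-1) ^ k * G k) (S n) + (-1) ^ (S n) * G (S n)).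
    change (rsum (fun l => (-1) ^ l * (G (S l) - G l)) (S n)) with
      (rsum (fun l => (-1) ^ l * (G (S l) - G l)) n + (-1) ^ n * (G (S n) - G n)).
    replace (rsum (fun k => (-1) ^ k * G k) (S n)) with
      (- (1 / 2) * rsum (fun l => (-1) ^ l * (G (S l) - G l)) n + (G O + (-1) ^ n * G n) / 2)
      by (rewrite <- IHn; ring).
    change ((-1) ^ (S n)) with (-1 * (-1) ^ n). set (s := (-1) ^ n). field.
Qed.

Section Calc.
Variables (f F : R -> R).
Hypothesis Hder : forall y, -1 <= y <= 1 -> deriv_within f (-1) 1 y (F y).

Lemma f_cont_within p : -1 <= p <= 1 -> forall eps, 0 < eps -> exists d, 0 < d /\
  forall y, -1 <= y <= 1 -> Rabs (y - p) < d -> Rabs (f y - f p) < eps.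
Proof.
  intros Hp eps Heps. destruct (Hder p Hp 1 Rlt_0_1) as [d1 [Hd1 H1]].
  set (C := Rabs (F p) + 1). assert (HC : 0 < C) by (unfold C; pose proof (Rabs_pos (F p)); lra).
  exists (Rmin d1 (eps / C)). split.
  { apply Rmin_pos; auto. unfold Rdiv. apply Rmult_lt_0_compat; [lra|apply Rinv_0_lt_compat; lra]. }
  intros y Hy Hyp. destruct (Req_dec y p) as [->|Hne].
  - replace (f p - f p) with 0 by ring. rewrite Rabs_R0. auto.
  - assert (Hq : Rabs ((f y - f p) / (y - p) - F p) < 1).
    { apply H1; auto. eapply Rlt_le_trans; [exact Hyp|apply Rmin_l]. }
    assert (Hq2 : Rabs ((f y - f p) / (y - p)) < C).
    { unfold C. replace ((f y - f p) / (y - p)) with (((f y - f p) / (y - p) - F p) + F p) by ring.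
      eapply Rle_lt_trans; [apply Rabs_triang|]. lra. }
    assert (Hyp0 : 0 < Rabs (y - p)) by (apply Rabs_pos_lt; lra).
    replace (f y - f p) with ((f y - f p) / (y - p) * (y - p)) by (field; lra).
    rewrite Rabs_mult.
    assert (Rabs (y - p) < eps / C) by (eapply Rlt_le_trans; [exact Hyp|apply Rmin_r]).
    apply Rlt_le_trans with (C * (eps / C)); [|right; field; lra].
    apply Rle_lt_trans with (C * Rabs (y - p)).
    + apply Rmult_le_compat_r; lra.
    + apply Rmult_lt_compat_l; auto.
Qed.

Lemma ft_cont t : continuity_pt (ft f) t.
Proof.
  unfold continuity_pt, continue_in, limit1_in, limit_in. intros eps Heps.
  destruct (f_cont_within (clamp t) (clamp_in t) eps Heps) as [d [Hd H]].
  exists d. split; auto. intros y [_ Hy]. simpl in *. unfold R_dist in *. unfold ft.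
  apply H; [apply clamp_in|]. eapply Rle_lt_trans; [apply clamp_lip|auto].
Qed.

Lemma ft_deriv y : -1 < y < 1 -> derivable_pt_lim (ft f) y (F y).
Proof.
  intros Hy eps Heps. destruct (Hder y ltac:(lra) eps Heps) as [d0 [Hd0 H]].
  assert (Hd : 0 < Rmin d0 (Rmin (y + 1) (1 - y))) by (repeat apply Rmin_pos; lra).
  exists (mkposreal _ Hd). intros h Hh Hhd. simpl in Hhd.
  pose proof (Rmin_l d0 (Rmin (y + 1) (1 - y))). pose proof (Rmin_r d0 (Rmin (y + 1) (1 - y))).
  pose proof (Rmin_l (y + 1) (1 - y)). pose proof (Rmin_r (y + 1) (1 - y)).
  assert (Hh' : -1 < y + h < 1) by (unfold Rabs in Hhd; destruct Rcase_abs; lra).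
  unfold ft. rewrite !clamp_id by lra.
  replace h with (y + h - y) at 2 by ring.
  apply H; [lra|lra|]. replace (y + h - y) with h by ring. lra.
Qed.

Lemma dpl_phi x d c u : d <> 0 -> -1 < x + u * d < 1 ->
  derivable_pt_lim (fun u => (ft f (x + u * d) - c) / d) u (F (x + u * d)).
Proof.
  intros Hd Hy.
  assert (H1 : derivable_pt_lim (comp (ft f) (fun u => x + u * d)) u (F (x + u * d) * d)).
  { apply derivable_pt_lim_comp; [apply dpl_affine|apply ft_deriv; auto]. }
  assert (H2 := derivable_pt_lim_minus _ _ _ _ _ H1 (derivable_pt_lim_const c u)).
  assert (H3 := derivable_pt_lim_scal _ (/ d) _ _ H2).
  replace (F (x + u * d)) with (/ d * (F (x + u * d) * d - 0)) by (field; auto).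
  eapply dpl_ext; [|exact H3]. intros t. unfold mult_real_fct, minus_fct, comp, fct_cte. unfold Rdiv. ring.
Qed.

Lemma cont_phi x d c e u : continuity_pt (fun u => (ft f (x + u * d) - c) / e) u.
Proof.
  assert (H1 : continuity_pt (comp (ft f) (fun u => x + u * d)) u).
  { apply continuity_pt_comp; [|apply ft_cont]. apply derivable_continuous_pt. exists d. apply dpl_affine. }
  assert (H2 : continuity_pt (fct_cte c) u) by (apply continuity_pt_const; intros ? ?; reflexivity).
  assert (H3 := continuity_pt_scal _ (/ e) _ (continuity_pt_minus _ _ _ H1 H2)).
  eapply continuity_pt_ext; [|exact H3]. intros t. unfold mult_real_fct, minus_fct, comp, fct_cte. unfold Rdiv. ring.
Qed.

Lemma T_mvt n x : (0 < n)%nat -> -1 < x < 1 -> ~ is_node n x ->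
  exists c, 0 <= c <= 1 /\
  Tsum n f x = - (1 / 2) * Asum (x + c * (-1 - x)) (c * (2 / INR n)) n F.
Proof.
  intros Hn Hx Hnn.
  set (d := fun k => node n k - x).
  set (phi := fun k u => (ft f (x + u * d k) - f x) / d k).
  set (K := fun u => rsum (fun k => (-1) ^ k * phi k u) (S n) - (phi O u + (-1) ^ n * phi n u) / 2).
  set (K' := fun u => rsum (fun k => (-1) ^ k * F (x + u * d k)) (S n) - (F (x + u * d O) + (-1) ^ n * F (x + u * d n)) / 2).
  assert (Hd : forall k, (k <= n)%nat -> d k <> 0).
  { intros k Hk E. apply Hnn. exists k. split; auto. unfold d in E. lra. }
  assert (Hyin : forall k u, (k <= n)%nat -> 0 < u < 1 -> -1 < x + u * d k < 1).
  { intros k u Hk Hu. pose proof (node_in n Hn k Hk). unfold d.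
    assert (0 < (1 - u) * (x + 1)) by (apply Rmult_lt_0_compat; lra).
    assert (0 <= u * (node n k + 1)) by (apply Rmult_le_pos; lra).
    assert (0 < (1 - u) * (1 - x)) by (apply Rmult_lt_0_compat; lra).
    assert (0 <= u * (1 - node n k)) by (apply Rmult_le_pos; lra).
    split; nra. }
  destruct (MVT_gen K 0 1 K') as [c [Hc Hmvt]].
  - intros u Hu. rewrite Rmin_left, Rmax_right in Hu by lra.
    apply is_derive_Reals. unfold K, K'.
    apply (dpl_ext ((fun u => rsum (fun k => ((-1) ^ k * phi k u)%R) (S n)) -
                     mult_real_fct (/ 2) (fun u => (phi O u + (-1) ^ n * phi n u)%R))%F).
    { intros t. unfold minus_fct, mult_real_fct. unfold Rdiv. ring. }
    replace (rsum (fun k => (-1) ^ k * F (x + u * d k)) (S n) -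
             (F (x + u * d O) + (-1) ^ n * F (x + u * d n)) / 2)
      with (rsum (fun k => (-1) ^ k * F (x + u * d k)) (S n) -
            / 2 * (F (x + u * d O) + (-1) ^ n * F (x + u * d n)))
      by (unfold Rdiv; ring).
    apply derivable_pt_lim_minus.
    + apply (dpl_rsum (fun k u => (-1) ^ k * phi k u)). intros k Hk.
      apply (dpl_ext (mult_real_fct ((-1) ^ k) (phi k))); [intros; reflexivity|].
      apply derivable_pt_lim_scal. apply dpl_phi; [apply Hd; lia|apply Hyin; auto; lia].
    + apply derivable_pt_lim_scal.
      apply (dpl_ext (phi O + mult_real_fct ((-1) ^ n) (phi n))%F); [intros; reflexivity|].
      apply derivable_pt_lim_plus; [apply dpl_phi; [apply Hd; lia|apply Hyin; auto; lia]|].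
      apply derivable_pt_lim_scal. apply dpl_phi; [apply Hd; lia|apply Hyin; auto; lia].
  - intros u _. unfold K.
    apply (continuity_pt_ext ((fun u => rsum (fun k => ((-1) ^ k * phi k u)%R) (S n)) -
                     mult_real_fct (/ 2) (fun u => (phi O u + (-1) ^ n * phi n u)%R))%F).
    { intros t. unfold minus_fct, mult_real_fct. unfold Rdiv. ring. }
    apply continuity_pt_minus.
    + apply (cont_rsum (fun k u => (-1) ^ k * phi k u)). intros k Hk.
      apply (continuity_pt_ext (mult_real_fct ((-1) ^ k) (phi k))); [intros; reflexivity|].
      apply continuity_pt_scal. apply cont_phi.
    + apply continuity_pt_scal.
      apply (continuity_pt_ext (phi O + mult_real_fct ((-1) ^ n) (phi n))%F); [intros; reflexivity|].
      apply continuity_pt_plus; [apply cont_phi|]. apply continuity_pt_scal. apply cont_phi.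
  - exists c. rewrite Rmin_left, Rmax_right in Hc by lra. split; auto.
    assert (HK0 : K 0 = 0).
    { unfold K, phi. unfold ft. rewrite (rsum_ext _ (fun _ => 0)).
      - rewrite rsum_zero. replace (x + 0 * d O) with x by ring. replace (x + 0 * d n) with x by ring.
        rewrite clamp_id by lra. unfold Rdiv. ring.
      - intros k Hk. replace (x + 0 * d k) with x by ring. rewrite clamp_id by lra. unfold Rdiv. ring. }
    assert (HK1 : K 1 = Tsum n f x).
    { unfold K, Tsum, phi, gdd, ft, d. 
      assert (Hc1 : forall k, (k <= n)%nat -> f (clamp (x + 1 * (node n k - x))) = f (node n k)).
      { intros k Hk. replace (x + 1 * (node n k - x)) with (node n k) by ring. rewrite clamp_id; auto.
        apply node_in; auto. }
      rewrite !Hc1 by lia. f_equal. apply rsum_ext. intros k Hk. rewrite Hc1 by lia. reflexivity. }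
    rewrite <- HK1. replace (K 1) with (K 1 - K 0) by (rewrite HK0; ring). rewrite Hmvt.
    unfold K'. simpl INR.
    rewrite (alt_identity (fun k => F (x + c * d k)) n).
    replace (1 - 0) with 1 by ring. rewrite Rmult_1_r. f_equal. unfold Asum. apply rsum_ext. intros l _.
    unfold d. rewrite !(node_alt n Hn). f_equal. f_equal; f_equal; rewrite ?S_INR; ring.
Qed.

End Calc.

Lemma strict_incr_ge s : strict_incr s -> forall j, (j <= s j)%nat.
Proof.
  intros Hs j. induction j; [lia|]. specialize (Hs j (S j) ltac:(lia)). lia.
Qed.

Lemma main_common f (Hf : AC1 f) (G : R -> R) (s : nat -> nat) (Hs : strict_incr s)
  (Hkey : forall j x, -1 < x < 1 -> ~ is_node (s j) x -> (0 < s j)%nat ->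
     Bn (s j) f x - f x - G x / Dn (s j) x = - Tsum (s j) f x / Dn (s j) x) :
  scaled_sup_to_zero s f G.
Proof.
  destruct Hf as [F [Hder HAC]].
  intros eps Heps.
  destruct (RL F (-1) 1 ltac:(lra) HAC eps Heps) as [eta [Heta HRL]].
  destruct (INR_archimed eta 2 Heta) as [J HJ].
  exists J. intros j Hj x Hx Hnn.
  set (n := s j).
  assert (HnJ : (J <= n)%nat) by (unfold n; pose proof (strict_incr_ge s Hs j); lia).
  assert (HJ1 : (1 <= J)%nat) by (destruct J; [simpl in HJ; lra|lia]).
  assert (Hn : (0 < n)%nat) by lia.
  assert (Hnpos : 0 < INR n) by (apply lt_0_INR; lia).
  pose proof (Hkey j x Hx Hnn Hn) as HK. fold n in HK. rewrite HK.
  destruct (T_mvt f F Hder n x Hn Hx Hnn) as [c [Hc HT]].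
  assert (Hsg : 0 <= c * (2 / INR n) <= eta).
  { assert (Hh : 2 / INR n <= eta).
    { apply le_INR in HnJ. apply Rmult_le_reg_r with (INR n); auto.
      unfold Rdiv. rewrite Rmult_assoc, Rinv_l by lra. nra. }
    assert (0 < 2 / INR n) by (unfold Rdiv; apply Rmult_lt_0_compat; [lra|apply Rinv_0_lt_compat; lra]).
    split; [apply Rmult_le_pos; lra|nra]. }
  assert (HA : Rabs (Asum (x + c * (-1 - x)) (c * (2 / INR n)) n F) <= eps).
  { apply HRL; auto.
    - nra.
    - replace (x + c * (-1 - x) + INR n * (c * (2 / INR n))) with (x + c * (1 - x)) by (field; lra). nra. }
  pose proof (D_lower n Hn x Hx Hnn) as HD.
  assert (HDpos : 0 < Rabs (Dn n x)) by lra.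
  assert (HD0 : Dn n x <> 0) by (intro E; rewrite E, Rabs_R0 in HDpos; lra).
  rewrite HT.
  replace (- (- (1 / 2) * Asum (x + c * (-1 - x)) (c * (2 / INR n)) n F) / Dn n x)
    with (/ 2 * Asum (x + c * (-1 - x)) (c * (2 / INR n)) n F * / Dn n x) by (field; auto).
  rewrite !Rabs_mult, !Rabs_inv. rewrite (Rabs_pos_eq 2) by lra.
  set (A := Rabs (Asum (x + c * (-1 - x)) (c * (2 / INR n)) n F)) in *.
  set (Dv := Rabs (Dn n x)) in *.
  assert (HA0 : 0 <= A) by apply Rabs_pos.
  clearbody A Dv n.
  assert (HiD : / Dv <= / (2 * INR n / 3)) by (apply Rinv_le_contravar; [lra|auto]).
  assert (HiD0 : 0 <= / Dv) by (left; apply Rinv_0_lt_compat; lra).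
  apply Rle_trans with (INR n * (/ 2 * eps * / (2 * INR n / 3))).
  - apply Rmult_le_compat_l; [lra|]. apply Rmult_le_compat; auto.
    + apply Rmult_le_pos; [left; apply Rinv_0_lt_compat; lra|auto].
    + apply Rmult_le_compat_l; [left; apply Rinv_0_lt_compat; lra|auto].
  - replace (INR n * (/ 2 * eps * / (2 * INR n / 3))) with (3 / 4 * eps) by (field; lra). lra.
Qed.

Theorem theorem2 (f : R -> R) (Hf : AC1 f) :
  (forall s : nat -> nat, strict_incr s -> (forall j, Nat.Odd (s j)) ->
     scaled_sup_to_zero s f (Ofun f)) /\
  (forall s : nat -> nat, strict_incr s -> (forall j, Nat.Even (s j)) ->
     scaled_sup_to_zero s f (Efun f)).
Proof.
  split; intros s Hs Hpar; apply main_common; auto; intros j x Hx Hnn Hn.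
  - apply key_odd; auto.
  - apply key_even; auto.
Qed.
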